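(* Let $\mathbb X,\mathbb Y,\mathbb X^\sharp,\mathbb Y^\sharp$ be sets, $c:\mathbb X\times\mathbb X^\sharp\to\overline{\mathbb R}$ and $d:\mathbb Y\times\mathbb Y^\sharp\to\overline{\mathbb R}$ couplings, $E:\mathbb X\times\mathbb Y^\sharp\to\overline{\mathbb R}$, $f:\mathbb X\to\overline{\mathbb R}$ and $g:\mathbb Y\to\overline{\mathbb R}$. If $$f(x)\ge\inf_{y\in\mathbb Y}\Big(\sup_{y^\sharp\in\mathbb Y^\sharp}\big(d(y,y^\sharp)\mathbin{\underset{\cdot}{+}}(-E(x,y^\sharp))\big)\mathbin{\overset{\cdot}{+}} g(y)\Big)\quad\text{for all }x\in\mathbb X,$$ then $$f^{c}(x^\sharp)\le\inf_{y^\sharp\in\mathbb Y^\sharp}\Big(\sup_{x\in\mathbb X}\big(c(x,x^\sharp)\mathbin{\underset{\cdot}{+}} E(x,y^\sharp)\big)\mathbin{\overset{\cdot}{+}} g^{-d}(y^\sharp)\Big)\quad\text{for all }x^\sharp\in\mathbb X^\sharp.$$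
   Context: $\overline{\mathbb R}=[-\infty,+\infty]$. The Moreau lower addition $\mathbin{\underset{\cdot}{+}}$ is usual addition extended by $(+\infty)\mathbin{\underset{\cdot}{+}}(-\infty)=(-\infty)\mathbin{\underset{\cdot}{+}}(+\infty)=-\infty$; the Moreau upper addition $\mathbin{\overset{\cdot}{+}}$ is usual addition extended by $(+\infty)\mathbin{\overset{\cdot}{+}}(-\infty)=(-\infty)\mathbin{\overset{\cdot}{+}}(+\infty)=+\infty$. $f^{c}(x^\sharp)=\sup_{x}\big(c(x,x^\sharp)\mathbin{\underset{\cdot}{+}}(-f(x))\big)$ and $g^{-d}(y^\sharp)=\sup_{y}\big((-d(y,y^\sharp))\mathbin{\underset{\cdot}{+}}(-g(y))\big)$. *)

(* Defs.v *)
From HB Require Import structures.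
From mathcomp Require Import all_boot all_order all_algebra.
From mathcomp Require Import all_classical all_reals ereal.
Set Implicit Arguments. Unset Strict Implicit. Unset Printing Implicit Defensive.
Import Order.TTheory GRing.Theory Num.Theory.
Local Open Scope classical_set_scope.
Local Open Scope ereal_scope.

(* Moreau lower addition: (+oo) + (-oo) = -oo  (MathComp-Analysis [adde]) *)
Definition lower_add {R : realType} (a b : \bar R) : \bar R := adde a b.
(* Moreau upper addition: (+oo) + (-oo) = +oo  (MathComp-Analysis [dual_adde]) *)
Definition upper_add {R : realType} (a b : \bar R) : \bar R := dual_adde a b.

Definition cconj {R : realType} {X Xs : Type} (c : X -> Xs -> \bar R)
  (f : X -> \bar R) (xs : Xs) : \bar R :=
  ereal_sup [set lower_add (c x xs) (- f x) | x in [set: X]].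

Definition mdconj {R : realType} {Y Ys : Type} (d : Y -> Ys -> \bar R)
  (g : Y -> \bar R) (ys : Ys) : \bar R :=
  ereal_sup [set lower_add (- d y ys) (- g y) | y in [set: Y]].

(* Main.v *)
Require Import Defs.
From HB Require Import structures.
From mathcomp Require Import all_boot all_order all_algebra.
From mathcomp Require Import all_classical all_reals ereal.
From mathcomp Require Import lra.
Import Order.TTheory GRing.Theory Num.Theory.
Local Open Scope classical_set_scope.
Local Open Scope ereal_scope.

Lemma pw (R : realType) (a p e q : \bar R) :
  lower_add a (lower_add (upper_add p e) q) <= upper_add (lower_add a e) (lower_add p q).
Proof.
rewrite /lower_add /upper_add.
case: a => [a||]; case: p => [p||]; case: e => [e||]; case: q => [q||] //=;
  rewrite ?lee_fin; try lra.
Qed.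

Lemma aux1 (R : realType) (r : R) (b s : \bar R) : r%:E + b <= s -> b <= s - r%:E.
Proof. case: b => [b||]; case: s => [s||] //=; rewrite ?lee_fin ?leey ?leNye //; lra. Qed.
Lemma aux2 (R : realType) (r : R) (s : \bar R) : r%:E + (s - r%:E) = s.
Proof. case: s => [s||] //=; congr (_%:E); lra. Qed.

Lemma supDl (R : realType) (a : \bar R) (B : set (\bar R)) :
  adde a (ereal_sup B) <= ereal_sup [set adde a b | b in B].
Proof.
change (a + ereal_sup B <= ereal_sup [set a + b | b in B]).
case: a => [r||].
- have H : ereal_sup B <= ereal_sup [set r%:E + b | b in B] - r%:E.
    apply: ge_ereal_sup => b Bb; apply: aux1.
    by apply: ereal_sup_ubound; exists b.
  by rewrite -[X in _ <= X](@aux2 _ r); apply: leeD.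
- have [->|] := eqVneq (ereal_sup B) -oo; first by rewrite addeNy leNye.
  rewrite -ltNye => /ereal_sup_gt [b Bb bgt].
  rewrite (@addye _ (ereal_sup B)); last by rewrite -ltNye (lt_le_trans bgt) // ereal_sup_ubound.
  apply: ereal_sup_ubound; exists b => //; rewrite addye // -ltNye.
  exact: bgt.
- by rewrite addNye leNye.
Qed.

Lemma L1 (R : realType) (a b : \bar R) : oppe (dual_adde a b) = adde (oppe a) (oppe b).
Proof. rewrite /dual_adde; case: a => [a||]; case: b => [b||] //=; by rewrite ?opprK ?opprD. Qed.
Lemma L2 (R : realType) (p e : \bar R) : oppe (adde p (oppe e)) = dual_adde (oppe p) e.
Proof. rewrite /dual_adde; case: p => [p||]; case: e => [e||] //=; congr (_%:E); lra. Qed.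
Lemma monoA (R : realType) (a b x y : \bar R) : a <= b -> x <= y -> adde a x <= adde b y.
Proof. exact: leeD. Qed.
Lemma monoD (R : realType) (a b x y : \bar R) : a <= b -> x <= y -> dual_adde a x <= dual_adde b y.
Proof. exact: DualAddTheoryRealDomain.lee_dD. Qed.

Theorem proposition4 (R : realType) (X Y Xs Ys : Type)
  (c : X -> Xs -> \bar R) (d : Y -> Ys -> \bar R)
  (E : X -> Ys -> \bar R) (f : X -> \bar R) (g : Y -> \bar R) :
  (forall x : X,
     ereal_inf [set upper_add
                  (ereal_sup [set lower_add (d y ys) (- E x ys) | ys in [set: Ys]])
                  (g y) | y in [set: Y]] <= f x) ->
  forall xs : Xs,
    cconj c f xs <=
    ereal_inf [set upper_add
                 (ereal_sup [set lower_add (c x xs) (E x ys) | x in [set: X]])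
                 (mdconj d g ys) | ys in [set: Ys]].
Proof.
move=> H xs; rewrite /cconj.
apply: ge_ereal_sup => _ [x _ <-].
apply: le_ereal_inf_tmp => _ [ys _ <-].
have H1 := H x.
rewrite /lower_add.
rewrite -leeN2 -ereal_supN in H1.
apply: (le_trans (@monoA _ _ _ _ _ (lexx (c x xs)) H1)).
apply: (le_trans (@supDl _ _ _)).
apply: ge_ereal_sup => _ [_ [_ [y _ <-] <-] <-].
rewrite /upper_add /lower_add L1.
set D := ereal_sup _.
have HD : - D <= dual_adde (- d y ys) (E x ys).
  rewrite -L2 leeN2.
  by apply: ereal_sup_ubound; exists ys.
apply: (@le_trans _ _ (lower_add (c x xs) (lower_add (upper_add (- d y ys) (E x ys)) (- g y)))).
  by apply: monoA => //; apply: monoA.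
apply: (le_trans (@pw _ (c x xs) (- d y ys) (E x ys) (- g y))).
rewrite /upper_add /lower_add; apply: monoD.
  + by apply: ereal_sup_ubound; exists x.
  + by rewrite /mdconj; apply: ereal_sup_ubound; exists y.
Qed.
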